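(* Let $\gamma$ be the Tribonacci constant and let $x,y\in\mathbb Z_{-\gamma}$. Then $\mathrm{fr}(x+y)\le 6$ and $\mathrm{fr}(x-y)\le 6$; in particular $\mathrm{fr}(-x)\le 6$. In words: the sum and the difference of two $(-\gamma)$-integers have finite $(-\gamma)$-expansions with at most $6$ digits after the radix point.
   Context: Let $\gamma\approx 1.839$ be the unique real root of $x^3-x^2-x-1$ (the Tribonacci constant). Fix a real number $\beta>1$ and set $\ell=\frac{-\beta}{\beta+1}$. Define $T_{-\beta}:[\ell,\ell+1)\to[\ell,\ell+1)$ by $T_{-\beta}(x)=-\beta x-\lfloor -\beta x-\ell\rfloor$. For $x\in[\ell,\ell+1)$, the $(-\beta)$-expansion of $x$ is the digit sequence $d_{-\beta}(x)=x_1x_2x_3\cdots$ with $x_i=\lfloor -\beta\, T_{-\beta}^{i-1}(x)-\ell\rfloor\in\{0,1,\dots,\lfloor\beta\rfloor\}$. It satisfies $x=\sum_{i\ge1}x_i(-\beta)^{-i}$. For arbitrary $x\in\mathbb R$, let $k\ge 0$ be the minimal integer with $x/(-\beta)^k\in(\ell,\ell+1)$ and let $d_{-\beta}(x/(-\beta)^k)=x_1x_2\cdots$. The $(-\beta)$-expansion of $x$ is $x_1\cdots x_k\bullet x_{k+1}x_{k+2}\cdots$ if $k\ge1$, and $0\bullet x_1x_2\cdots$ if $k=0$. The digits written after the symbol $\bullet$ are the fractional digits. The set of $(-\beta)$-integers $\mathbb Z_{-\beta}$ is the set of $x\in\mathbb R$ whose $(-\beta)$-expansion has only zeros after $\bullet$.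 Equivalently, $\mathbb Z_{-\beta}=\bigcup_{i\ge0}(-\beta)^iT_{-\beta}^{-i}(0)$. The set of numbers with finite expansion is $\mathrm{Fin}(-\beta)=\bigcup_{i\ge0}(-\beta)^{-i}\mathbb Z_{-\beta}$. For $x\in\mathrm{Fin}(-\beta)$ with expansion $x_k\cdots x_0\bullet x_{-1}\cdots x_{-n}0^\omega$ and $x_{-n}\ne0$, set $\mathrm{fr}(x)=n$. Set $\mathrm{fr}(x)=0$ if all fractional digits are zero, and $\mathrm{fr}(x)=+\infty$ if $x\notin\mathrm{Fin}(-\beta)$. *)

(* Defs.v *)
From Stdlib Require Import Reals Lra Lia ZArith.
Open Scope R_scope.

(* floor : Int_part r = up r - 1 is the floor of r (base_Int_part). *)

Definition ell (b : R) : R := - b / (b + 1).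

Definition Tneg (b x : R) : R := - b * x - IZR (Int_part (- b * x - ell b)).

(* digit x_i of d_{-beta}(x) for i = m+1 :
   x_{m+1} = floor(-beta T^m(x) - l) *)
Definition digit (b x : R) (m : nat) : Z :=
  Int_part (- b * (Nat.iter m (Tneg b) x) - ell b).

Definition in_open (b y : R) : Prop := ell b < y < ell b + 1.
Definition min_index (b x : R) (k : nat) : Prop :=
  in_open b (x / (- b) ^ k) /\ (forall j : nat, (j < k)%nat -> ~ in_open b (x / (- b) ^ j)).

(* The fractional digits of x are x_{k+1}, x_{k+2}, ... of d_{-beta}(x/(-beta)^k);
   the j-th fractional digit (j >= 1) is x_{k+j} = digit b (x/(-beta)^k) (k+j-1).
   frac_zero_after b x n : all fractional digits at positions j > n vanish. *)
Definition frac_zero_after (b x : R) (n : nat) : Prop :=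
  exists k : nat, min_index b x k /\
    forall j : nat, (n < j)%nat -> digit b (x / (- b) ^ k) (k + j - 1) = 0%Z.

Definition in_Zneg (b x : R) : Prop := frac_zero_after b x 0.

Definition in_Fin (b x : R) : Prop := exists i : nat, in_Zneg b (x * (- b) ^ i).

(* fr(x) <= n : x in Fin(-beta) (otherwise fr(x) = +infinity) and the last
   nonzero fractional digit (if any) is at position <= n. *)
Definition fr_le (b x : R) (n : nat) : Prop := in_Fin b x /\ frac_zero_after b x n.

(* Main.v *)
Require Import Defs.
From Stdlib Require Import Reals Lra Lia ZArith List Classical Bool.
Open Scope R_scope.

Lemma Int_part_unique r (n : Z) : IZR n <= r < IZR n + 1 -> Int_part r = n.
Proof.
  intros [H1 H2]. destruct (base_Int_part r) as [H3 H4].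
  assert (A1 : IZR (Int_part r) < IZR (n + 1)) by (rewrite plus_IZR; lra).
  assert (A2 : IZR n < IZR (Int_part r + 1)) by (rewrite plus_IZR; lra).
  apply lt_IZR in A1, A2. lia.
Qed.

Lemma ell_mul b : 1 < b -> ell b * (b + 1) = - b.
Proof. intros; unfold ell; field; lra. Qed.

Lemma ell_bounds b : 1 < b -> -1 < ell b /\ ell b < 0 /\ ell b + 1 > 0 /\ ell b + 1 < 1
  /\ ell b < - (ell b + 1).
Proof.
  intros Hb. pose proof (ell_mul b Hb) as H.
  assert (ell b = - b / (b+1)) by reflexivity.
  repeat split; nra.
Qed.

Lemma Tneg_range b u : ell b <= Tneg b u < ell b + 1.
Proof.
  unfold Tneg. destruct (base_Int_part (- b * u - ell b)). lra.
Qed.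

Lemma Tneg_formula b u (d : Z) : IZR d <= - b * u - ell b < IZR d + 1 ->
  Tneg b u = - b * u - IZR d.
Proof. intros H. unfold Tneg. rewrite (Int_part_unique _ d H). reflexivity. Qed.

Lemma Tneg_digit b u : 1 < b -> b < 2 -> ell b <= u < ell b + 1 ->
  exists d : Z, (d = 0 \/ d = 1)%Z /\ Tneg b u = - b * u - IZR d.
Proof.
  intros Hb Hb2 [H1 H2]. pose proof (ell_mul b Hb) as He.
  set (r := - b * u - ell b).
  assert (R1 : 0 < r) by (unfold r; nra).
  assert (R2 : r <= b) by (unfold r; nra).
  exists (Int_part r). destruct (base_Int_part r) as [H3 H4]. split.
  - assert (A1 : IZR (Int_part r) < IZR 2) by lra.
    assert (A2 : IZR (-1) < IZR (Int_part r)) by lra.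
    apply lt_IZR in A1, A2. lia.
  - reflexivity.
Qed.

Lemma Tneg_0 b : 1 < b -> Tneg b 0 = 0.
Proof.
  intros Hb. pose proof (ell_bounds b Hb).
  rewrite (Tneg_formula b 0 0); [lra|]. simpl. lra.
Qed.

Lemma iter_zero b n : 1 < b -> Nat.iter n (Tneg b) 0 = 0.
Proof. intros Hb. induction n; simpl; [reflexivity|]. rewrite IHn. apply Tneg_0; auto. Qed.

Lemma open_div b w : 1 < b -> in_open b w -> in_open b (w / - b).
Proof.
  intros Hb [H1 H2]. pose proof (ell_mul b Hb) as He. pose proof (ell_bounds b Hb).
  set (v := w / - b). assert (Hw : w = - b * v) by (unfold v; field; lra).
  rewrite Hw in H1, H2. split; nra.
Qed.

Lemma T_div b w : 1 < b -> in_open b w -> Tneg b (w / - b) = w.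
Proof.
  intros Hb [H1 H2]. rewrite (Tneg_formula b _ 0).
  - simpl. field. lra.
  - replace (- b * (w / - b)) with w by (field; lra). simpl. lra.
Qed.

Lemma iter_div b j : 1 < b -> forall w, in_open b w -> Nat.iter j (Tneg b) (w / (- b) ^ j) = w.
Proof.
  intros Hb. induction j; intros w Hw.
  - simpl. field.
  - replace (w / (- b) ^ S j) with ((w / - b) / (- b) ^ j).
    + simpl Nat.iter. rewrite IHj by (apply open_div; auto). apply T_div; auto.
    + simpl. field. split; [apply pow_nonzero|]; lra.
Qed.

Lemma open_up b z k : 1 < b -> in_open b (z / (- b) ^ k) ->
  forall m, (k <= m)%nat -> in_open b (z / (- b) ^ m).
Proof.
  intros Hb H m Hm. induction Hm; auto.
  replace (z / (- b) ^ S m) with ((z / (- b) ^ m) / - b).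
  - apply open_div; auto.
  - simpl. field. split; [apply pow_nonzero|]; lra.
Qed.

Lemma exists_open b z : 1 < b -> exists k, in_open b (z / (- b) ^ k).
Proof.
  intros Hb. pose proof (ell_bounds b Hb) as [E1 [E2 [E3 [E4 E5]]]].
  assert (Hx : Rabs (/ - b) < 1).
  { rewrite Rabs_inv by lra. rewrite Rabs_left by lra.
    replace 1 with (/ 1) by field. apply Rinv_lt_contravar; lra. }
  assert (Hy : 0 < (ell b + 1) / (Rabs z + 1)).
  { apply Rdiv_lt_0_compat; [lra|]. pose proof (Rabs_pos z); lra. }
  destruct (pow_lt_1_zero _ Hx _ Hy) as [N HN].
  exists N. specialize (HN N (le_n _)).
  assert (Ha : Rabs (z / (- b) ^ N) < ell b + 1).
  { unfold Rdiv. rewrite <- pow_inv. rewrite Rabs_mult.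
    pose proof (Rabs_pos z). pose proof (Rabs_pos ((/ - b) ^ N)).
    apply Rmult_lt_compat_r with (r := Rabs z + 1) in HN; [|lra].
    unfold Rdiv in HN. rewrite Rmult_assoc, Rinv_l in HN by lra. nra. }
  apply Rabs_def2 in Ha. unfold in_open. lra.
Qed.

Lemma min_exists_gen (P : nat -> Prop) n : P n -> exists k, P k /\ forall j, (j < k)%nat -> ~ P j.
Proof.
  revert n. induction n as [n IH] using (well_founded_induction lt_wf). intros Hn.
  destruct (classic (exists j, (j < n)%nat /\ P j)) as [[j [Hj Pj]]|Hno].
  - exact (IH j Hj Pj).
  - exists n. split; auto. intros j Hj Pj. apply Hno. eauto.
Qed.

Lemma min_exists b z : 1 < b -> exists k, min_index b z k.
Proof.
  intros Hb. destruct (exists_open b z Hb) as [k Hk].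
  destruct (min_exists_gen (fun k => in_open b (z / (- b) ^ k)) k Hk) as [m [H1 H2]].
  exists m. split; auto.
Qed.

Lemma iter_range b w : in_open b w -> forall m, ell b <= Nat.iter m (Tneg b) w < ell b + 1.
Proof.
  intros [H1 H2] m. destruct m; simpl.
  - lra.
  - apply Tneg_range.
Qed.

Lemma bounded_zero b c : 1 < b -> (forall i, Rabs ((- b) ^ i * c) <= 1) -> c = 0.
Proof.
  intros Hb H. destruct (Req_dec c 0) as [|Hc]; auto. exfalso.
  assert (Hx : Rabs (/ - b) < 1).
  { rewrite Rabs_inv by lra. rewrite Rabs_left by lra.
    replace 1 with (/ 1) by field. apply Rinv_lt_contravar; lra. }
  assert (Hy : 0 < Rabs c) by (apply Rabs_pos_lt; auto).
  destruct (pow_lt_1_zero _ Hx _ Hy) as [N HN]. specialize (HN N (le_n _)).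
  specialize (H N).
  assert (Hc2 : c = ((/ - b) ^ N) * ((- b) ^ N * c)).
  { rewrite pow_inv. field. apply pow_nonzero. lra. }
  assert (Hm : Rabs c = Rabs ((/ - b) ^ N) * Rabs ((- b) ^ N * c)).
  { rewrite <- Rabs_mult. rewrite <- Hc2. reflexivity. }
  pose proof (Rabs_pos ((/ - b) ^ N)). nra.
Qed.
Definition Gp b z n := exists K, in_open b (z / (- b) ^ K) /\ Nat.iter (K + n) (Tneg b) (z / (- b) ^ K) = 0.

Lemma iter_shift b z K K' n : 1 < b -> (K <= K')%nat -> in_open b (z / (- b) ^ K) ->
  Nat.iter (K' + n) (Tneg b) (z / (- b) ^ K') = Nat.iter (K + n) (Tneg b) (z / (- b) ^ K).
Proof.
  intros Hb HK Ho.
  replace (K' + n)%nat with ((K + n) + (K' - K))%nat by lia.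
  rewrite Nat.iter_add.
  replace (z / (- b) ^ K') with ((z / (- b) ^ K) / (- b) ^ (K' - K)).
  - rewrite iter_div; auto.
  - replace K' with ((K' - K) + K)%nat at 2 by lia. rewrite pow_add. field.
    split; apply pow_nonzero; lra.
Qed.

Lemma G_all b z n : 1 < b -> Gp b z n -> forall K', in_open b (z / (- b) ^ K') ->
  Nat.iter (K' + n) (Tneg b) (z / (- b) ^ K') = 0.
Proof.
  intros Hb [K [Ho H]] K' Ho'.
  set (M := Nat.max K K').
  rewrite <- (iter_shift b z K' M n Hb) by (auto; lia).
  rewrite (iter_shift b z K M n Hb) by (auto; lia). exact H.
Qed.

Lemma Zneg_G b x : 1 < b -> in_Zneg b x -> Gp b x 0.
Proof.
  intros Hb [k [[Ho Hmin] Hd]].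
  set (w := x / (- b) ^ k).
  assert (Hc : forall i, Nat.iter (k + i) (Tneg b) w = (- b) ^ i * Nat.iter k (Tneg b) w).
  { induction i.
    - rewrite Nat.add_0_r. simpl. ring.
    - rewrite Nat.add_succ_r.
      specialize (Hd (S i) ltac:(lia)). replace (k + S i - 1)%nat with (k + i)%nat in Hd by lia.
      unfold digit in Hd. change (Nat.iter (S (k + i)) (Tneg b) w) with (Tneg b (Nat.iter (k + i) (Tneg b) w)).
      unfold Tneg at 1. fold w in Hd. rewrite Hd, IHi. simpl. ring. }
  exists k. split; auto. rewrite Nat.add_0_r.
  apply (bounded_zero b); auto. intros i. pose proof (Hc i) as Hci. unfold w in Hci. rewrite <- Hci.
  pose proof (iter_range b _ Ho (k + i)). pose proof (ell_bounds b Hb).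
  apply Rabs_le. lra.
Qed.

Lemma G_fr b z : 1 < b -> Gp b z 6 -> fr_le b z 6.
Proof.
  intros Hb HG. pose proof (ell_bounds b Hb) as EB.
  destruct (min_exists b z Hb) as [k [Ho Hm]].
  pose proof (G_all b z 6 Hb HG k Ho) as Hz.
  split.
  - exists 6%nat. destruct (min_exists b (z * (- b) ^ 6) Hb) as [k' [Ho' Hm']].
    exists k'. split; [split; auto|].
    assert (HG' : Gp b (z * (- b) ^ 6) 0).
    { destruct HG as [K [HK1 HK2]]. exists (K + 6)%nat.
      replace (z * (- b) ^ 6 / (- b) ^ (K + 6)) with (z / (- b) ^ K).
      - rewrite Nat.add_0_r. auto.
      - rewrite pow_add. field. repeat split; try apply pow_nonzero; lra. }
    pose proof (G_all b _ 0 Hb HG' k' Ho') as H0. rewrite Nat.add_0_r in H0.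
    intros j Hj. unfold digit.
    replace (k' + j - 1)%nat with ((j - 1) + k')%nat by lia.
    rewrite Nat.iter_add, H0, iter_zero by auto.
    apply Int_part_unique. simpl. lra.
  - exists k. split; [split; auto|].
    intros j Hj. unfold digit.
    replace (k + j - 1)%nat with ((j - 7) + (k + 6))%nat by lia.
    rewrite Nat.iter_add, Hz, iter_zero by auto.
    apply Int_part_unique. simpl. lra.
Qed.
Open Scope Z_scope.
Open Scope bool_scope.
Import ListNotations.
Definition tri := (Z * Z * Z)%type.
Definition tadd (s t : tri) : tri := let '(a,b,c) := s in let '(a',b',c') := t in (a+a', b+b', c+c').
Definition tneg (t : tri) : tri := let '(a,b,c) := t in (-a,-b,-c).
Definition mg (t : tri) : tri := let '(a,b,c) := t in (-c, -a-c, -b-c).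
Definition m1 (t : tri) : tri := let '(a,b,c) := t in (a+c, a+b+c, b+2*c).
Definition addc (t : tri) (n : Z) : tri := let '(a,b,c) := t in (a+n, b, c).
Definition NN : Z := 1000000000.
Definition G0 : Z := 1839286755.
Definition G1 : Z := 1839286756.
Definition H0 : Z := 3382975767.
Definition H1 : Z := 3382975771.
Definition lowb (t : tri) : Z := let '(a,b,c) := t in
  NN*a + (if 0 <=? b then b*G0 else b*G1) + (if 0 <=? c then c*H0 else c*H1).
Definition posb t := 0 <? lowb t.
Definition teqb (s t : tri) : bool := let '(a,b,c) := s in let '(a',b',c') := t in
  Z.eqb a a' && Z.eqb b b' && Z.eqb c c'.
Definition nonnegb t := teqb t (0,0,0) || posb t.
Fixpoint findd (ds : list Z) (t : tri) : option tri :=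
  match ds with
  | nil => None
  | d :: ds' =>
    let t1 := addc (mg t) (-d) in
    let X := tadd (m1 t1) (0,1,0) in
    let Y := tadd (1,1,0) (tneg X) in
    if nonnegb X && posb Y then Some t1 else findd ds' t
  end.
Definition Tstep t := findd (-4 :: -3 :: -2 :: -1 :: 0 :: 1 :: 2 :: 3 :: 4 :: nil) t.
Fixpoint Titer (n : nat) (t : tri) : option tri :=
  match n with
  | O => Some t
  | S n' => match Tstep t with Some t1 => Titer n' t1 | None => None end
  end.
Definition outI t := posb (tneg (tadd (m1 t) (0,1,0))) || nonnegb (tadd (m1 t) (-1,0,0)).
Definition fin_ok t := outI t || match Titer 6 t with Some t' => teqb t' (0,0,0) | None => false end.
Definition fin_check L := forallb fin_ok L.
Definition outb (p q t : tri) := nonnegb (tneg (tadd (m1 t) p)) || nonnegb (tadd (m1 t) (tneg q)).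
Definition memb (t : tri) L := existsb (teqb t) L.
Definition d01 := 0 :: 1 :: nil.
Definition step_check sg p q L := forallb (fun t => forallb (fun a => forallb (fun a2 => forallb (fun c =>
  let t' := addc (mg t) (a + sg*a2 - c) in memb t' L || outb p q t') d01) d01) d01) L.
Definition Ep : list tri := [(-3,0,1); (-2,-3,2); (-2,-2,2); (-2,-1,1); (-2,0,1); (-2,1,0); (-1,-3,2); (-1,-2,1); (-1,-1,1); (-1,0,0); (-1,1,0); (-1,2,-1); (0,-3,2); (0,-2,1); (0,-1,1); (0,0,0); (0,2,-1); (1,-3,1); (1,-2,1); (1,-1,0); (1,0,0); (1,1,-1); (1,2,-1); (2,-3,1); (2,-1,0); (2,1,-1); (3,-2,0); (3,-1,0); (3,0,-1); (3,1,-1)].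
Definition Em : list tri := [(-3,-1,1); (-3,0,1); (-3,1,0); (-3,2,0); (-2,-1,1); (-2,1,0); (-2,3,-1); (-1,-2,1); (-1,-1,1); (-1,0,0); (-1,1,0); (-1,2,-1); (-1,3,-1); (0,-2,1); (0,0,0); (0,1,-1); (0,2,-1); (0,3,-2); (1,-2,1); (1,-1,0); (1,0,0); (1,1,-1); (1,2,-1); (1,3,-2); (2,-1,0); (2,0,-1); (2,1,-1); (2,2,-2); (2,3,-2); (3,0,-1)].

Lemma chk1 : step_check 1 (2,1,0) (1,2,0) Ep = true. Proof. vm_compute. reflexivity. Qed.
Lemma chk2 : step_check (-1) (1,2,0) (2,1,0) Em = true. Proof. vm_compute. reflexivity. Qed.
Lemma chk3 : fin_check Ep = true. Proof. vm_compute. reflexivity. Qed.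
Lemma chk4 : fin_check Em = true. Proof. vm_compute. reflexivity. Qed.
Close Scope Z_scope.
Definition E (g : R) (t : tri) : R := let '(a,b,c) := t in IZR a + IZR b * g + IZR c * g ^ 2.

Lemma gbounds g : 1 < g -> g ^ 3 - g ^ 2 - g - 1 = 0 ->
  IZR G0 <= IZR NN * g <= IZR G1 /\ IZR H0 <= IZR NN * g ^ 2 <= IZR H1.
Proof.
  intros H1g Hg. unfold G0, G1, H0, H1, NN.
  assert (A : 1839286755 / 1000000000 <= g).
  { destruct (Rle_lt_dec (1839286755 / 1000000000) g); auto. exfalso. nra. }
  assert (B : g <= 1839286756 / 1000000000).
  { destruct (Rle_lt_dec g (1839286756 / 1000000000)); auto. exfalso. nra. }
  repeat split; nra.
Qed.

Lemma lowb_sound g t : 1 < g -> g ^ 3 - g ^ 2 - g - 1 = 0 -> IZR (lowb t) <= IZR NN * E g t.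
Proof.
  intros H1g Hg. destruct (gbounds g H1g Hg) as [[A1 A2] [B1 B2]].
  destruct t as [[a b] c]. unfold lowb, E.
  destruct (Z.leb_spec 0 b) as [Hb|Hb]; destruct (Z.leb_spec 0 c) as [Hc|Hc];
  apply IZR_le in Hb || apply IZR_lt in Hb; apply IZR_le in Hc || apply IZR_lt in Hc;
  rewrite !plus_IZR, !mult_IZR; unfold NN in *; nra.
Qed.

Lemma teqb_sound s t : teqb s t = true -> s = t.
Proof.
  destruct s as [[a b] c], t as [[a' b'] c']. simpl.
  intros H. apply andb_prop in H as [H H3]. apply andb_prop in H as [H1 H2].
  apply Z.eqb_eq in H1, H2, H3. subst. reflexivity.
Qed.

Lemma posb_sound g t : 1 < g -> g ^ 3 - g ^ 2 - g - 1 = 0 -> posb t = true -> 0 < E g t.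
Proof.
  intros H1g Hg H. unfold posb in H. apply Z.ltb_lt in H. apply IZR_lt in H.
  pose proof (lowb_sound g t H1g Hg). unfold NN in *. lra.
Qed.

Lemma nonnegb_sound g t : 1 < g -> g ^ 3 - g ^ 2 - g - 1 = 0 -> nonnegb t = true -> 0 <= E g t.
Proof.
  intros H1g Hg H. unfold nonnegb in H. apply orb_prop in H as [H|H].
  - apply teqb_sound in H. subst. simpl. lra.
  - apply (posb_sound g) in H; auto. lra.
Qed.

Lemma E_tadd g s t : E g (tadd s t) = E g s + E g t.
Proof. destruct s as [[a b] c], t as [[a' b'] c']. simpl. rewrite !plus_IZR. ring. Qed.

Lemma E_tneg g t : E g (tneg t) = - E g t.
Proof. destruct t as [[a b] c]. simpl. rewrite !opp_IZR. ring. Qed.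

Lemma E_addc g t n : E g (addc t n) = E g t + IZR n.
Proof. destruct t as [[a b] c]. simpl. rewrite !plus_IZR. ring. Qed.

Lemma E_mg g t : g ^ 3 - g ^ 2 - g - 1 = 0 -> E g (mg t) = - g * E g t.
Proof.
  intros Hg. destruct t as [[a b] c]. cbn [E mg].
  rewrite !minus_IZR, !opp_IZR. apply Rminus_diag_uniq.
  replace (- IZR c + (- IZR a - IZR c) * g + (- IZR b - IZR c) * g ^ 2 -
    - g * (IZR a + IZR b * g + IZR c * g ^ 2))
    with (IZR c * (g ^ 3 - g ^ 2 - g - 1)) by ring.
  rewrite Hg. ring.
Qed.

Lemma E_m1 g t : g ^ 3 - g ^ 2 - g - 1 = 0 -> E g (m1 t) = (g + 1) * E g t.
Proof.
  intros Hg. destruct t as [[a b] c]. cbn [E m1].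
  rewrite !plus_IZR, !mult_IZR. apply Rminus_diag_uniq.
  replace (IZR a + IZR c + (IZR a + IZR b + IZR c) * g + (IZR b + IZR 2 * IZR c) * g ^ 2 -
    (g + 1) * (IZR a + IZR b * g + IZR c * g ^ 2))
    with (- IZR c * (g ^ 3 - g ^ 2 - g - 1)) by ring.
  rewrite Hg. ring.
Qed.

Lemma findd_sound g ds t t1 : 1 < g -> g ^ 3 - g ^ 2 - g - 1 = 0 ->
  findd ds t = Some t1 -> Tneg g (E g t) = E g t1.
Proof.
  intros H1g Hg. induction ds as [|d ds IH]; [discriminate|].
  change (findd (d :: ds) t) with
    (if nonnegb (tadd (m1 (addc (mg t) (-d))) (0,1,0)%Z) &&
        posb (tadd (1,1,0)%Z (tneg (tadd (m1 (addc (mg t) (-d))) (0,1,0)%Z)))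
     then Some (addc (mg t) (-d)) else findd ds t).
  destruct (nonnegb _ && posb _) eqn:Hc; [|exact IH].
  intros H. injection H as <-. apply andb_prop in Hc as [HX HY].
  apply (nonnegb_sound g) in HX; auto. apply (posb_sound g) in HY; auto.
  rewrite E_tadd, E_tneg, E_tadd, E_m1, E_addc, E_mg in HY by auto.
  rewrite E_tadd, E_m1, E_addc, E_mg in HX by auto.
  rewrite E_addc, E_mg by auto.
  cbn [E] in HX, HY. rewrite opp_IZR in *.
  pose proof (ell_mul g H1g) as He.
  apply (Tneg_formula g _ d). nra.
Qed.

Lemma Titer_sound g n t t' : 1 < g -> g ^ 3 - g ^ 2 - g - 1 = 0 ->
  Titer n t = Some t' -> Nat.iter n (Tneg g) (E g t) = E g t'.
Proof.
  intros H1g Hg. revert t. induction n; simpl; intros t H.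
  - injection H as <-. reflexivity.
  - destruct (Tstep t) as [t1|] eqn:Ht; [|discriminate].
    rewrite <- Nat.iter_swap. apply (findd_sound g) in Ht; auto. rewrite Ht. auto.
Qed.

Lemma outI_sound g t : 1 < g -> g ^ 3 - g ^ 2 - g - 1 = 0 -> outI t = true ->
  ~ (ell g <= E g t < ell g + 1).
Proof.
  intros H1g Hg H [Ha Hb]. pose proof (ell_mul g H1g) as He.
  unfold outI in H. apply orb_prop in H as [H|H].
  - apply (posb_sound g) in H; auto. rewrite E_tneg, E_tadd, E_m1 in H by auto. simpl in H. nra.
  - apply (nonnegb_sound g) in H; auto. rewrite E_tadd, E_m1 in H by auto. simpl in H. nra.
Qed.

Lemma fin_sound g L t : 1 < g -> g ^ 3 - g ^ 2 - g - 1 = 0 -> fin_check L = true -> In t L ->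
  ell g <= E g t < ell g + 1 -> Nat.iter 6 (Tneg g) (E g t) = 0.
Proof.
  intros H1g Hg HL Hin Hr. unfold fin_check in HL. rewrite forallb_forall in HL.
  specialize (HL t Hin). unfold fin_ok in HL. apply orb_prop in HL as [H|H].
  - exfalso. exact (outI_sound g t H1g Hg H Hr).
  - destruct (Titer 6 t) as [t'|] eqn:Ht; [|discriminate].
    apply teqb_sound in H. subst. rewrite (Titer_sound g 6 t _ H1g Hg Ht). simpl. ring.
Qed.

Lemma memb_sound t L : memb t L = true -> In t L.
Proof.
  unfold memb. rewrite existsb_exists. intros [x [Hx He]]. apply teqb_sound in He. subst. auto.
Qed.

Lemma outb_sound g p q t : 1 < g -> g ^ 3 - g ^ 2 - g - 1 = 0 -> outb p q t = true ->
  ~ (0 < (g + 1) * E g t + E g p /\ (g + 1) * E g t - E g q < 0).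
Proof.
  intros H1g Hg H [Ha Hb]. unfold outb in H. apply orb_prop in H as [H|H].
  - apply (nonnegb_sound g) in H; auto. rewrite E_tneg, E_tadd, E_m1 in H by auto. lra.
  - apply (nonnegb_sound g) in H; auto. rewrite E_tadd, E_tneg, E_m1 in H by auto. lra.
Qed.

Lemma step_sound g sg p q L t a a2 c : 1 < g -> g ^ 3 - g ^ 2 - g - 1 = 0 ->
  step_check sg p q L = true -> In t L -> (a = 0 \/ a = 1)%Z -> (a2 = 0 \/ a2 = 1)%Z -> (c = 0 \/ c = 1)%Z ->
  let t' := addc (mg t) (a + sg * a2 - c) in
  0 < (g + 1) * E g t' + E g p -> (g + 1) * E g t' - E g q < 0 -> In t' L.
Proof.
  intros H1g Hg HL Hin Ha Ha2 Hc t' H1 H2.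
  unfold step_check in HL. rewrite forallb_forall in HL. specialize (HL t Hin).
  rewrite forallb_forall in HL. specialize (HL a ltac:(unfold d01; simpl; lia)).
  rewrite forallb_forall in HL. specialize (HL a2 ltac:(unfold d01; simpl; lia)).
  rewrite forallb_forall in HL. specialize (HL c ltac:(unfold d01; simpl; lia)).
  apply orb_prop in HL as [H|H].
  - apply memb_sound. exact H.
  - exfalso. exact (outb_sound g p q _ H1g Hg H (conj H1 H2)).
Qed.
Lemma main_gen g sg p q L : 1 < g -> g ^ 3 - g ^ 2 - g - 1 = 0 ->
  step_check sg p q L = true -> fin_check L = true -> In (0,0,0)%Z L ->
  (forall s u v, ell g <= s < ell g + 1 -> ell g <= u < ell g + 1 -> ell g <= v < ell g + 1 ->
     0 < (g + 1) * (s - u - IZR sg * v) + E g p /\ (g + 1) * (s - u - IZR sg * v) - E g q < 0) ->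
  forall x y, Gp g x 0 -> Gp g y 0 -> Gp g (x + IZR sg * y) 6.
Proof.
  intros H1g Hg Hchk Hfin H0 Hrange x y Gx Gy.
  assert (Hg2 : g < 2).
  { destruct (gbounds g H1g Hg) as [[A B] _]. unfold G1, NN in *. lra. }
  set (z := x + IZR sg * y).
  pose proof Gx as [Kx [Hox _]]. pose proof Gy as [Ky [Hoy _]].
  destruct (exists_open g z H1g) as [Kz Hoz].
  set (K := Nat.max (Nat.max Kx Ky) Kz).
  assert (Hox' : in_open g (x / (- g) ^ K)) by (apply (open_up g x Kx); auto; lia).
  assert (Hoy' : in_open g (y / (- g) ^ K)) by (apply (open_up g y Ky); auto; lia).
  assert (Hoz' : in_open g (z / (- g) ^ K)) by (apply (open_up g z Kz); auto; lia).
  assert (Hux : Nat.iter K (Tneg g) (x / (- g) ^ K) = 0).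
  { pose proof (G_all g x 0 H1g Gx K Hox') as H. rewrite Nat.add_0_r in H. exact H. }
  assert (Huy : Nat.iter K (Tneg g) (y / (- g) ^ K) = 0).
  { pose proof (G_all g y 0 H1g Gy K Hoy') as H. rewrite Nat.add_0_r in H. exact H. }
  set (wx := x / (- g) ^ K) in *. set (wy := y / (- g) ^ K) in *. set (wz := z / (- g) ^ K) in *.
  assert (Inv : forall j, exists t, In t L /\
    Nat.iter j (Tneg g) wz - Nat.iter j (Tneg g) wx - IZR sg * Nat.iter j (Tneg g) wy = E g t).
  { induction j.
    - exists (0,0,0)%Z. split; auto. simpl. unfold wz, wx, wy, z. field.
      apply pow_nonzero. lra.
    - destruct IHj as [t [Hin He]].
      destruct (Tneg_digit g _ H1g Hg2 (iter_range g wz Hoz' j)) as [dc [Hdc Ec]].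
      destruct (Tneg_digit g _ H1g Hg2 (iter_range g wx Hox' j)) as [da [Hda Ea]].
      destruct (Tneg_digit g _ H1g Hg2 (iter_range g wy Hoy' j)) as [da2 [Hda2 Ea2]].
      pose proof (iter_range g wz Hoz' (S j)) as Rz.
      pose proof (iter_range g wx Hox' (S j)) as Rx.
      pose proof (iter_range g wy Hoy' (S j)) as Ry.
      rewrite !Nat.iter_succ in *.
      exists (addc (mg t) (da + sg * da2 - dc)).
      assert (Heq : Tneg g (Nat.iter j (Tneg g) wz) - Tneg g (Nat.iter j (Tneg g) wx)
        - IZR sg * Tneg g (Nat.iter j (Tneg g) wy) = E g (addc (mg t) (da + sg * da2 - dc))).
      { rewrite E_addc, E_mg by auto. rewrite <- He, Ec, Ea, Ea2.
        rewrite minus_IZR, plus_IZR, mult_IZR. ring. }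
      split; [|exact Heq].
      destruct (Hrange _ _ _ Rz Rx Ry) as [R1 R2]. rewrite Heq in R1, R2.
      apply (step_sound g sg p q L t da da2 dc); auto. }
  destruct (Inv K) as [t [Hin He]]. rewrite Hux, Huy in He.
  assert (Ht : Nat.iter K (Tneg g) wz = E g t) by (rewrite <- He; ring).
  exists K. split; [exact Hoz'|].
  change (Nat.iter (K + 6) (Tneg g) wz = 0). rewrite Nat.add_comm, Nat.iter_add, Ht.
  apply (fin_sound g L t); auto. rewrite <- Ht. apply iter_range; auto.
Qed.

Lemma range_plus g : 1 < g -> forall s u v, ell g <= s < ell g + 1 -> ell g <= u < ell g + 1 ->
  ell g <= v < ell g + 1 ->
  0 < (g + 1) * (s - u - IZR 1 * v) + E g (2,1,0)%Z /\ (g + 1) * (s - u - IZR 1 * v) - E g (1,2,0)%Z < 0.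
Proof.
  intros H1g s u v Hs Hu Hv. pose proof (ell_mul g H1g). cbn [E].
  assert (s - u - 1 * v > - ell g - 2) by lra.
  assert (s - u - 1 * v < 1 - ell g) by lra.
  split; nra.
Qed.

Lemma range_minus g : 1 < g -> forall s u v, ell g <= s < ell g + 1 -> ell g <= u < ell g + 1 ->
  ell g <= v < ell g + 1 ->
  0 < (g + 1) * (s - u - IZR (-1) * v) + E g (1,2,0)%Z /\ (g + 1) * (s - u - IZR (-1) * v) - E g (2,1,0)%Z < 0.
Proof.
  intros H1g s u v Hs Hu Hv. pose proof (ell_mul g H1g). cbn [E].
  assert (s - u - (-1) * v > ell g - 1) by lra.
  assert (s - u - (-1) * v < ell g + 2) by lra.
  split; nra.
Qed.

Theorem theorem1 (g : R) (Hg1 : 1 < g) (Hg : g ^ 3 - g ^ 2 - g - 1 = 0)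
  (x y : R) (Hx : in_Zneg g x) (Hy : in_Zneg g y) :
  fr_le g (x + y) 6 /\ fr_le g (x - y) 6 /\ fr_le g (- x) 6.
Proof.
  pose proof (Zneg_G g x Hg1 Hx) as Gx. pose proof (Zneg_G g y Hg1 Hy) as Gy.
  assert (G0z : Gp g 0 0).
  { exists 0%nat. split.
    - pose proof (ell_bounds g Hg1). unfold in_open. simpl. unfold Rdiv. rewrite Rmult_0_l. lra.
    - simpl. unfold Rdiv. rewrite Rmult_0_l. reflexivity. }
  pose proof (main_gen g 1 (2,1,0)%Z (1,2,0)%Z Ep Hg1 Hg chk1 chk3 ltac:(simpl; tauto)
    (range_plus g Hg1)) as Mp.
  pose proof (main_gen g (-1) (1,2,0)%Z (2,1,0)%Z Em Hg1 Hg chk2 chk4 ltac:(simpl; tauto)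
    (range_minus g Hg1)) as Mm.
  split; [|split]; apply G_fr; auto.
  - replace (x + y) with (x + IZR 1 * y) by ring. apply Mp; auto.
  - replace (x - y) with (x + IZR (-1) * y) by ring. apply Mm; auto.
  - replace (- x) with (0 + IZR (-1) * x) by ring. apply Mm; auto.
Qed.
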